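(* Let $G$ be a graph. Then $G$ has exactly one minimum zero forcing set (i.e., $G$ is a unique zero forcing graph) if and only if $G$ has no edges.
   Context: Zero forcing: in a graph $G$, starting with an initial set $S\subseteq V(G)$ of active vertices, repeatedly apply the rule: if an active vertex $u$ has exactly one non-active neighbor $v$, then $v$ becomes active. $S$ is a zero forcing set if eventually all vertices become active; a minimum zero forcing set is a zero forcing set of minimum size. *)

(* Defs.v *)
From mathcomp Require Import all_boot.
Set Implicit Arguments. Unset Strict Implicit. Unset Printing Implicit Defensive.

Definition simple_graph (V : finType) (e : rel V) : Prop :=
  symmetric e /\ irreflexive e.

Definition zf_step (V : finType) (e : rel V) (S : {set V}) : {set V} :=
  S :|: [set v | [exists u, [&& u \in S, e u v, v \notin S &
              [forall w, (e u w && (w \notin S)) ==> (w == v)]]]].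

(* The final set of active vertices (the process stabilises after at most
   #|V| rounds since S only grows). *)
Definition zf_closure (V : finType) (e : rel V) (S : {set V}) : {set V} :=
  iter #|V| (zf_step e) S.

Definition zero_forcing_set (V : finType) (e : rel V) (S : {set V}) : bool :=
  zf_closure e S == [set: V].

Definition minimum_zero_forcing_set (V : finType) (e : rel V) (S : {set V}) : Prop :=
  zero_forcing_set e S /\
  forall S' : {set V}, zero_forcing_set e S' -> #|S| <= #|S'|.

Definition unique_zero_forcing_graph (V : finType) (e : rel V) : Prop :=
  exists S : {set V}, minimum_zero_forcing_set e S /\
    forall S' : {set V}, minimum_zero_forcing_set e S' -> S' = S.

Definition edgeless (V : finType) (e : rel V) : Prop :=
  forall u v : V, ~~ e u v.

(* Main.v *)
Require Import Defs.
From mathcomp Require Import all_boot.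
From mathcomp Require Import zify.
Set Implicit Arguments. Unset Strict Implicit. Unset Printing Implicit Defensive.

Lemma step_sub (V : finType) (e : rel V) (S : {set V}) : S \subset zf_step e S.
Proof. exact: subsetUl. Qed.

Lemma iter_mono (V : finType) (e : rel V) (S : {set V}) n m :
  n <= m -> iter n (zf_step e) S \subset iter m (zf_step e) S.
Proof.
elim: m => [|m IH]; first by rewrite leqn0 => /eqP ->.
rewrite leq_eqVlt => /orP [/eqP -> //|]; rewrite ltnS => /IH H.
apply: (subset_trans H); rewrite iterS; exact: step_sub.
Qed.

Lemma step_force (V : finType) (e : rel V) (A B : {set V}) u v :
  A \subset B -> u \in A -> e u v -> (forall w, e u w -> w != v -> w \in A) ->
  v \in zf_step e B.
Proof.
move=> AB uA euv Hw; rewrite /zf_step inE.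
case vB: (v \in B) => //=; rewrite inE; apply/existsP; exists u.
rewrite (subsetP AB _ uA) euv vB /=; apply/forallP => w; apply/implyP => /andP [euw wB].
apply/negPn/negP => wv; have := subsetP AB _ (Hw w euw wv); by rewrite (negbTE wB).
Qed.

Definition Abef (V : finType) (S : {set V}) (t : V -> nat) (v : V) : {set V} :=
  [set x | (x \in S) || (t x < t v)].

Definition forcing (V : finType) (e : rel V) (S : {set V}) (f : V -> V) (t : V -> nat) :=
  forall v, v \notin S -> [/\ f v \in Abef S t v, e (f v) v &
     forall w, e (f v) w -> w != v -> w \in Abef S t v].

Lemma forcing_zf (V : finType) (e : rel V) S f t :
  forcing e S f t -> zero_forcing_set e S.
Proof.
move=> Hf.
pose c v := #|[set x | (x \notin S) && (t x < t v)]|.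
have key : forall n v, c v < n -> v \in iter (c v).+1 (zf_step e) S.
  elim=> [//|n IH] v cv.
  case vS: (v \in S).
    by apply: (subsetP (iter_mono e S (leq0n _))).
  have [H1 H2 H3] := Hf v (negbT vS).
  have sub : Abef S t v \subset iter (c v) (zf_step e) S.
    apply/subsetP => x; rewrite inE; case xS: (x \in S) => /=.
      by move=> _; apply: (subsetP (iter_mono e S (leq0n _))).
    move=> txv.
    have cx : c x < c v.
      apply: proper_card; apply/properP; split.
        apply/subsetP => y; rewrite !inE => /andP [-> /=] ?; exact: ltn_trans txv.
      by exists x; rewrite !inE ?xS ?txv ?ltnn.
    apply: (subsetP (iter_mono e S cx)); apply: IH; exact: leq_trans cx cv.
  rewrite iterS; exact: step_force sub H1 H2 H3.
rewrite /zero_forcing_set /zf_closure eqEsubset subsetT /=.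
apply/subsetP => v _.
case vS: (v \in S); first by apply: (subsetP (iter_mono e S (leq0n _))).
have le : (c v).+1 <= #|V|.
  have : #|v |: [set x | (x \notin S) && (t x < t v)]| <= #|V| by apply: max_card.
  by rewrite cardsU1 inE ltnn andbF.
apply: (subsetP (iter_mono e S le)); exact: key (ltnSn _).
Qed.

Lemma zf_forcing (V : finType) (e : rel V) S :
  zero_forcing_set e S -> exists f t, forcing e S f t.
Proof.
move=> /eqP Hz.
have exP : forall v, exists k, v \in iter k (zf_step e) S.
  by move=> v; exists #|V|; rewrite -/(zf_closure e S) Hz inE.
pose r v := ex_minn (exP v).
have rP : forall v, v \in iter (r v) (zf_step e) S.
  by move=> v; rewrite /r; case: ex_minnP.
have rmin : forall v k, v \in iter k (zf_step e) S -> r v <= k.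
  by move=> v k; rewrite /r; case: ex_minnP => m _ H /H.
pose Q v u := [&& u \in iter (r v).-1 (zf_step e) S, e u v,
   v \notin iter (r v).-1 (zf_step e) S &
   [forall w, (e u w && (w \notin iter (r v).-1 (zf_step e) S)) ==> (w == v)]].
exists (fun v => odflt v [pick u | Q v u]), r.
move=> v vS.
have r0 : r v != 0.
  by apply/eqP => r0; have := rP v; rewrite r0 /= (negbTE vS).
have sub : iter (r v).-1 (zf_step e) S \subset Abef S r v.
  apply/subsetP => x /rmin rx; rewrite inE; apply/orP; right; lia.
have : v \in zf_step e (iter (r v).-1 (zf_step e) S).
  by rewrite -iterS prednK ?lt0n //; exact: rP.
case/setUP => [vI|].
  by have := rmin _ _ vI; lia.
rewrite inE => /existsP [u0 Hu0].
have HQ : Q v u0 := Hu0.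
case: pickP => [u /= Hu|/(_ u0)]; last by rewrite HQ.
case/and4P: Hu => uI euv _ /forallP Hw.
split; first exact: (subsetP sub).
  done.
move=> w euw wv; apply: (subsetP sub); apply/negPn/negP => wI.
by have := Hw w; rewrite euw wI (negbTE wv).
Qed.

Lemma reversal (V : finType) (e : rel V) S f t :
  symmetric e -> forcing e S f t ->
  exists T : {set V}, [/\ zero_forcing_set e T, #|T| = #|S| &
     (exists v, v \notin S) -> T != S].
Proof.
move=> sym Hf.
have inj : {in ~: S &, injective f}.
  move=> v v'; rewrite !inE => vS v'S fvv.
  apply/eqP/negP => /negP vv'.
  have [_ e1 H1] := Hf v vS; have [_ e2 H2] := Hf v' v'S.
  have := H1 v'; rewrite fvv e2 eq_sym => /(_ isT vv'); rewrite inE (negbTE v'S) /=.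
  have := H2 v; rewrite -fvv e1 => /(_ isT vv'); rewrite inE (negbTE vS) /=.
  lia.
pose T := ~: (f @: ~: S).
have TC : forall u, (u \notin T) = (u \in f @: ~: S) by move=> u; rewrite inE negbK.
pose g u := odflt u [pick v | (v \notin S) && (f v == u)].
have gf : forall v, v \notin S -> g (f v) = v.
  move=> v vS; rewrite /g; case: pickP => [v' /andP [v'S /eqP fv]|/(_ v)].
    by apply: inj; rewrite ?inE.
  by rewrite vS eqxx.
pose N := \max_(v : V) t v.
have tN : forall v, t v <= N by move=> v; apply: leq_bigmax.
exists T; split.
- apply: (@forcing_zf _ e T g (fun u => N - t (g u))).
  move=> u; rewrite TC => /imsetP [v]; rewrite inE => vS ->.
  rewrite gf //; have [_ evu H] := Hf v vS.
  have later : forall w, w \notin T -> e v w || (w == v) -> w != f v ->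
     w \in Abef T (fun u => N - t (g u)) (f v).
    move=> w; rewrite TC => /imsetP [v' ]; rewrite inE => v'S -> Hw wn.
    rewrite inE gf // gf //; apply/orP; right.
    have vv' : v != v' by apply: contraNneq wn => ->.
    have [_ _ H'] := Hf v' v'S.
    have : v \in Abef S t v'.
      case/orP: Hw => [Hw|/eqP Hw]; last by have [+ _ _] := Hf v' v'S; rewrite -Hw.
      by apply: H' => //; rewrite sym.
    rewrite inE (negbTE vS) /= => lt. have := tN v'; lia.
  split.
  + case vT: (v \in T); first by rewrite inE vT.
    apply: later; first by rewrite vT.
      by rewrite eqxx orbT.
    by apply/eqP => vf; have [+ _ _] := Hf v vS; rewrite inE -vf ltnn orbF (negbTE vS).
  + by rewrite sym.
  + move=> w ew wn; case wT: (w \in T); first by rewrite inE wT.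
    by apply: later; rewrite ?wT // ew.
- have h1 := cardsC T; have h2 := cardsC S.
  rewrite setCK card_in_imset // in h1; lia.
- case=> v0 v0S.
  case: (@arg_minnP _ v0 (fun x => x \notin S) t v0S) => v vS vmin.
  have [H1 _ _] := Hf v vS.
  have fvS : f v \in S.
    move: H1; rewrite inE => /orP [//|lt].
    apply/negPn/negP => fS; have := vmin _ fS; lia.
  apply/eqP => TS; move: fvS; rewrite -TS -[_ \in T]negbK TC.
  by rewrite imset_f // inE.
Qed.
Theorem corollary3p3 (V : finType) (e : rel V) (He : simple_graph e) :
  unique_zero_forcing_graph e <-> edgeless e.
Proof.
case: He => sym irr; split.
- move=> [S [[zS minS] uniqS]] u v; apply/negP => euv.
  have uv : u != v by apply: contraTneq euv => ->; rewrite irr.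
  have zV : zero_forcing_set e (setT :\ v).
    apply: (@forcing_zf _ e _ (fun _ => u) (fun _ => 0)) => x.
    rewrite !inE andbT negbK => /eqP ->; split.
    + by rewrite /Abef ?inE uv.
    + exact: euv.
    + by move=> w _ wv; rewrite /Abef ?inE wv.
  have hm := minS _ zV.
  have Hc := cardsD1 v [set: V]; rewrite in_setT in Hc.
  have HS : #|S| < #|V| by rewrite cardsT in Hc; lia.
  have [v0 v0S] : exists v0, v0 \notin S.
    case: (pickP (fun x => x \notin S)) => [x xS|Hall]; first by exists x.
    have ST : S = setT by apply/setP => x; rewrite inE; have := Hall x; move/negbFE.
    by move: HS; rewrite ST cardsT ltnn.
  have [f [t Hf]] := zf_forcing zS.
  have [T [zT cT nT]] := reversal sym Hf.
  have : T = S.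
    apply: uniqS; split => // S' zS'; rewrite cT; exact: minS.
  by apply/eqP; apply: nT; exists v0.
- move=> Hn.
  have fix0 : forall S : {set V}, zf_step e S = S.
    move=> S; apply/setP => x; rewrite /zf_step in_setU in_set.
    case: (x \in S) => //=.
    apply: negbTE; apply/existsP => -[u /and3P [_ eux _]].
    by move: (Hn u x); rewrite eux.
  have zfT : forall S, zero_forcing_set e S -> S = setT.
    move=> S; rewrite /zero_forcing_set /zf_closure.
    have -> : forall n, iter n (zf_step e) S = S by elim=> //= n ->; rewrite fix0.
    by move/eqP.
  exists setT; split.
    split; last by move=> S' /zfT ->.
    rewrite /zero_forcing_set /zf_closure eqEsubset subsetT /=.
    exact: (iter_mono e setT (leq0n _)).
  by move=> S' [/zfT ->].
Qed.
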